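(* (a) The one-dimensional completely elliptic subspaces of $\mathbb{R}^3$ are exactly the four lines spanned by $(1,1,1)$, $(-1,1,1)$, $(1,-1,1)$, $(1,1,-1)$. (b) A two-dimensional subspace $S\subset\mathbb{R}^3$ with unit normal vector $\mathbf{w}=(w_1,w_2,w_3)$ is completely elliptic if and only if either $(w_1+w_2-w_3)(w_1-w_2+w_3)(-w_1+w_2+w_3)(w_1+w_2+w_3)>0$, or $\mathbf{w}$ is, up to sign, a unit multiple of one of the six vectors $(0,1,1)$, $(0,1,-1)$, $(1,0,1)$, $(1,0,-1)$, $(1,1,0)$, $(1,-1,0)$.
   Context: A linear subspace $S\subseteq\mathbb{R}^N$ of dimension $M$ is called completely elliptic if there exists a real $N\times M$ matrix $\mathbf{s}$ whose $M$ columns lie in $S$, whose $N$ rows are unit vectors of $\mathbb{R}^M$, and with $\operatorname{rank}\mathbf{s}=M$ (equivalently, the columns of $\mathbf{s}$ form a basis of $S$). Here $N=3$. *)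

(* Defs.v *)
From mathcomp Require Import all_boot all_order all_algebra.
From mathcomp Require Import reals.
Set Implicit Arguments. Unset Strict Implicit. Unset Printing Implicit Defensive.
Import Order.TTheory GRing.Theory Num.Theory.
Local Open Scope ring_scope.

(* A linear subspace of R^N is represented (MathComp mxalgebra style) by a
   matrix S : 'M_N whose row space is the subspace; its dimension is \rank S. *)

Definition vec3 (R : realType) (a b c : R) : 'rV[R]_3 :=
  \row_(i < 3) nth 0 [:: a; b; c] i.

Definition coord3 (R : realType) (w : 'rV[R]_3) (k : nat) : R :=
  w ord0 (inord k).

(* S (of dimension M) is completely elliptic: there is an N x M real matrix
   s whose M columns lie in S, whose N rows are unit vectors of R^M, and with
   rank s = M.  "Columns of s lie in S" = the rows of s^T lie in the row space
   of S. *)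
Definition completely_elliptic (R : realType) (N M : nat) (S : 'M[R]_N) : Prop :=
  \rank S = M /\
  exists s : 'M[R]_(N, M),
    [/\ (s^T <= S)%MS,
        (forall i : 'I_N, \sum_(j < M) s i j ^+ 2 = 1)
      & \rank s = M].

(* Main.v *)
Require Import Defs.
From mathcomp Require Import all_boot all_order all_algebra.
From mathcomp Require Import reals.
From mathcomp Require Import ring lra zify.
Import Order.TTheory GRing.Theory Num.Theory.
Local Open Scope ring_scope.
Set Implicit Arguments. Unset Strict Implicit.

Definition o20 : 'I_2 := @Ordinal 2 0 isT.
Definition o21 : 'I_2 := @Ordinal 2 1 isT.
Definition o30 : 'I_3 := @Ordinal 3 0 isT.
Definition o31 : 'I_3 := @Ordinal 3 1 isT.
Definition o32 : 'I_3 := @Ordinal 3 2 isT.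

Lemma sum2 (R : realType) (f : 'I_2 -> R) : \sum_(j < 2) f j = f o20 + f o21.
Proof.
rewrite big_ord_recr big_ord_recr big_ord0 /= add0r.
by congr (f _ + f _); apply: val_inj.
Qed.

Lemma sum3 (R : realType) (f : 'I_3 -> R) :
  \sum_(j < 3) f j = f o30 + f o31 + f o32.
Proof.
rewrite big_ord_recr big_ord_recr big_ord_recr big_ord0 /= add0r.
by congr (f _ + f _ + f _); apply: val_inj.
Qed.

Lemma ker_rank (R : realType) (s : 'M[R]_(3,2)) (x : 'cV[R]_2) :
  x != 0 -> s *m x = 0 -> (\rank s < 2)%N.
Proof.
move=> nx sx.
have h1 : (x^T <= kermx s^T)%MS by apply/sub_kermxP; rewrite -trmx_mul sx trmx0.
have rx : \rank x^T = 1%N by rewrite rank_rV trmx_eq0 nx.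
have := mxrankS h1; rewrite rx mxrank_ker mxrank_tr.
have := rank_leq_col s; lia.
Qed.

Lemma rank_ker (R : realType) (s : 'M[R]_(3,2)) :
  (\rank s < 2)%N -> exists x : 'cV[R]_2, x != 0 /\ s *m x = 0.
Proof.
move=> lt.
set K := kermx s^T.
have nK : K != 0.
  by rewrite -mxrank_eq0 /K mxrank_ker mxrank_tr; lia.
case: (pickP (fun i => row i K != 0)) => [i Hi | H]; last first.
  case/negP: nK; apply/eqP/row_matrixP => i; rewrite row0; apply/eqP.
  by move: (H i) => /negbFE.
exists (row i K)^T; split; first by rewrite trmx_eq0.
have : (row i K <= K)%MS by apply: row_sub.
move/sub_kermxP => h.
by rewrite -[s]trmxK -trmx_mul h trmx0.
Qed.

Lemma minor_rank (R : realType) (s : 'M[R]_(3,2)) (i j : 'I_3) :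
  s i o20 * s j o21 - s j o20 * s i o21 != 0 -> \rank s = 2%N.
Proof.
move=> hd; apply/eqP; rewrite eqn_leq rank_leq_col /= leqNgt; apply/negP.
move/rank_ker => [x [nx sx]].
have e : forall k, s k o20 * x o20 0 + s k o21 * x o21 0 = 0.
  by move=> k; have := congr1 (fun M : 'M[R]_(3,1) => M k 0) sx; rewrite !mxE sum2.
have ei := e i; have ej := e j.
have x0 : x o20 0 = 0.
  have : x o20 0 * (s i o20 * s j o21 - s j o20 * s i o21) = 0.
    have -> : x o20 0 * (s i o20 * s j o21 - s j o20 * s i o21)
      = (s i o20 * x o20 0 + s i o21 * x o21 0) * s j o21
        - (s j o20 * x o20 0 + s j o21 * x o21 0) * s i o21 by ring.
    by rewrite ei ej; ring.
  by move/eqP; rewrite mulf_eq0 (negbTE hd) orbF => /eqP.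
have x1 : x o21 0 = 0.
  have : x o21 0 * (s i o20 * s j o21 - s j o20 * s i o21) = 0.
    have -> : x o21 0 * (s i o20 * s j o21 - s j o20 * s i o21)
      = (s j o20 * x o20 0 + s j o21 * x o21 0) * s i o20
        - (s i o20 * x o20 0 + s i o21 * x o21 0) * s j o20 by ring.
    by rewrite ei ej; ring.
  by move/eqP; rewrite mulf_eq0 (negbTE hd) orbF => /eqP.
case/negP: nx; apply/eqP/matrixP => k l.
rewrite (ord1 l) mxE.
case: k => [[|[|k]] Hk] //.
- by rewrite -x0; congr (x _ _); apply: val_inj.
- by rewrite -x1; congr (x _ _); apply: val_inj.
Qed.
Lemma vec3_eta (R : realType) (w : 'rV[R]_3) :
  w = vec3 (w ord0 o30) (w ord0 o31) (w ord0 o32).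
Proof.
apply/rowP => i; rewrite mxE.
by case: i => [[|[|[|k]]] Hk] //=; congr (w _ _); apply: val_inj.
Qed.

Lemma vec3N (R : realType) (a b c : R) : - vec3 a b c = vec3 (-a) (-b) (-c).
Proof. by apply/rowP => i; rewrite !mxE; case: i => [[|[|[|k]]] Hk] //=; rewrite oppr0. Qed.

Lemma vec3Z (R : realType) (k a b c : R) : k *: vec3 a b c = vec3 (k*a) (k*b) (k*c).
Proof. by apply/rowP => i; rewrite !mxE; case: i => [[|[|[|j]]] Hj] //=; rewrite mulr0. Qed.

Lemma vec3_neq0 (R : realType) (a b c : R) : a != 0 -> vec3 a b c != 0.
Proof. by move=> na; apply/eqP => /rowP/(_ o30); rewrite !mxE /=; apply/eqP. Qed.

Lemma coord3_0 (R : realType) (w : 'rV[R]_3) : coord3 w 0 = w ord0 o30.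
Proof. by rewrite /coord3; congr (w _ _); apply: val_inj; rewrite /= inordK. Qed.
Lemma coord3_1 (R : realType) (w : 'rV[R]_3) : coord3 w 1 = w ord0 o31.
Proof. by rewrite /coord3; congr (w _ _); apply: val_inj; rewrite /= inordK. Qed.
Lemma coord3_2 (R : realType) (w : 'rV[R]_3) : coord3 w 2 = w ord0 o32.
Proof. by rewrite /coord3; congr (w _ _); apply: val_inj; rewrite /= inordK. Qed.

Lemma sq1 (R : realType) (x : R) : x ^+ 2 = 1 -> x = 1 \/ x = -1.
Proof. by move/eqP; rewrite sqrf_eq1 => /orP[/eqP|/eqP]; [left|right]. Qed.

Lemma eqS_of (R : realType) (S : 'M[R]_3) (t v : 'rV[R]_3) :
  (t == S)%MS -> (t = v \/ t = - v) -> (S == v)%MS.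
Proof.
move=> tS [ht|ht]; rewrite ht in tS; move/eqmxP: tS => tS; apply/eqmxP.
  exact: eqmx_sym.
exact: eqmx_trans (eqmx_sym tS) (eqmx_opp v).
Qed.

Lemma partA (R : realType) (S : 'M[R]_3) : \rank S = 1%N ->
  (completely_elliptic 1 S <->
        [\/ (S == vec3 1 1 1)%MS, (S == vec3 (-1) 1 1)%MS,
            (S == vec3 1 (-1) 1)%MS | (S == vec3 1 1 (-1))%MS]).
Proof.
move=> rS; split.
  move=> [_ [s [sub hs rs]]].
  have eq : (s^T == S)%MS.
    by rewrite -(mxrank_leqif_eq sub).2 mxrank_tr rs rS.
  have hst : s^T = vec3 (s o30 0) (s o31 0) (s o32 0).
    apply/rowP => i; rewrite !mxE.
    by case: i => [[|[|[|k]]] Hk] //=; congr (s _ _); apply: val_inj.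
  have e : forall i, s i 0 = 1 \/ s i 0 = -1.
    by move=> i; apply: sq1; have := hs i; rewrite big_ord1.
  rewrite hst in eq.
  case: (e o30) => h0; case: (e o31) => h1; case: (e o32) => h2;
    rewrite h0 h1 h2 in eq.
  - by apply: Or41; apply: eqS_of eq _; left.
  - by apply: Or44; apply: eqS_of eq _; left.
  - by apply: Or43; apply: eqS_of eq _; left.
  - by apply: Or42; apply: eqS_of eq _; right; rewrite vec3N ?opprK.
  - by apply: Or42; apply: eqS_of eq _; left.
  - by apply: Or43; apply: eqS_of eq _; right; rewrite vec3N ?opprK.
  - by apply: Or44; apply: eqS_of eq _; right; rewrite vec3N ?opprK.
  - by apply: Or41; apply: eqS_of eq _; right; rewrite vec3N ?opprK.
have key : forall v : 'rV[R]_3, (S == v)%MS ->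
    (forall i, v ord0 i ^+ 2 = 1) -> completely_elliptic 1 S.
  move=> v Sv hv; split=> //; exists v^T; split.
  - by rewrite trmxK; case/andP: Sv.
  - by move=> i; rewrite big_ord1 mxE hv.
  - rewrite mxrank_tr rank_rV; apply/eqP; rewrite eqb1.
    by apply/eqP => v0; have := hv o30; rewrite v0 mxE expr2 mul0r => /eqP; rewrite eq_sym oner_eq0.
by case=> Sv; apply: (key _ Sv) => i; rewrite mxE; case: i => [[|[|[|k]]] Hk] //=;
  rewrite ?sqrrN expr1n.
Qed.
Definition Hf {R : realType} (a b c : R) :=
  (a + b - c) * (a - b + c) * (- a + b + c) * (a + b + c).

Lemma two_eq (R : realType) (a b c0 d0 c1 d1 : R) :
  c0 ^+ 2 + d0 ^+ 2 = 1 -> c1 ^+ 2 + d1 ^+ 2 = 1 ->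
  a * c0 + b * c1 = 0 -> a * d0 + b * d1 = 0 -> b = a \/ b = - a.
Proof.
move=> h0 h1 E1 E2.
have e1 : b * c1 = - (a * c0) by lra.
have e2 : b * d1 = - (a * d0) by lra.
have : b ^+ 2 = a ^+ 2.
  transitivity (b ^+ 2 * (c1 ^+ 2 + d1 ^+ 2)); first by rewrite h1 mulr1.
  transitivity ((b * c1) ^+ 2 + (b * d1) ^+ 2); first by ring.
  rewrite e1 e2.
  transitivity (a ^+ 2 * (c0 ^+ 2 + d0 ^+ 2)); first by ring.
  by rewrite h0 mulr1.
by move/eqP; rewrite eqf_sqr => /orP[/eqP|/eqP]; [left|right].
Qed.

Arguments two_eq {R a b c0 d0 c1 d1}.

Lemma scalar_fwd (R : realType) (a b c c0 d0 c1 d1 c2 d2 : R) :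
  c0 ^+ 2 + d0 ^+ 2 = 1 -> c1 ^+ 2 + d1 ^+ 2 = 1 -> c2 ^+ 2 + d2 ^+ 2 = 1 ->
  a * c0 + b * c1 + c * c2 = 0 -> a * d0 + b * d1 + c * d2 = 0 ->
  ~ [/\ c0 * d1 - c1 * d0 = 0, c1 * d2 - c2 * d1 = 0 & c2 * d0 - c0 * d2 = 0] ->
  0 < Hf a b c \/ (c = 0 /\ (b = a \/ b = - a)) \/ (a = 0 /\ (c = b \/ c = - b))
  \/ (b = 0 /\ (c = a \/ c = - a)).
Proof.
move=> h0 h1 h2 E1 E2 hr.
case: (eqVneq a 0) => [a0|na].
  right; right; left; split=> //; apply: (two_eq h1 h2).
    by move: E1; rewrite a0 mul0r add0r.
  by move: E2; rewrite a0 mul0r add0r.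
case: (eqVneq b 0) => [b0|nb].
  right; right; right; split=> //; apply: (two_eq h0 h2).
    by move: E1; rewrite b0 mul0r addr0.
  by move: E2; rewrite b0 mul0r addr0.
case: (eqVneq c 0) => [c0'|nc].
  right; left; split=> //; apply: (two_eq h0 h1).
    by move: E1; rewrite c0' mul0r addr0.
  by move: E2; rewrite c0' mul0r addr0.
left.
set g := c0 * c1 + d0 * d1.
have hD : (c0 * d1 - c1 * d0) ^+ 2 = 1 - g ^+ 2.
  transitivity ((c0 ^+ 2 + d0 ^+ 2) * (c1 ^+ 2 + d1 ^+ 2) - g ^+ 2); first by rewrite /g; ring.
  by rewrite h0 h1 mulr1.
have hc : c ^+ 2 = a ^+ 2 + b ^+ 2 + 2 * a * b * g.
  have e1 : c * c2 = - (a * c0 + b * c1) by lra.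
  have e2 : c * d2 = - (a * d0 + b * d1) by lra.
  transitivity (c ^+ 2 * (c2 ^+ 2 + d2 ^+ 2)); first by rewrite h2 mulr1.
  transitivity ((c * c2) ^+ 2 + (c * d2) ^+ 2); first by ring.
  rewrite e1 e2.
  transitivity (a ^+ 2 * (c0 ^+ 2 + d0 ^+ 2) + b ^+ 2 * (c1 ^+ 2 + d1 ^+ 2)
     + 2 * a * b * g); first by rewrite /g; ring.
  by rewrite h0 h1 !mulr1.
have hH : Hf a b c = 4 * (a * b * (c0 * d1 - c1 * d0)) ^+ 2.
  transitivity (4 * a ^+ 2 * b ^+ 2 - (c ^+ 2 - a ^+ 2 - b ^+ 2) ^+ 2);
    first by rewrite /Hf; ring.
  rewrite hc.
  transitivity (4 * a ^+ 2 * b ^+ 2 * (1 - g ^+ 2)); first by ring.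
  by rewrite -hD; ring.
have nD : c0 * d1 - c1 * d0 != 0.
  apply/eqP => D0; apply: hr; split=> //.
    have : c * (c1 * d2 - c2 * d1) = 0.
      transitivity (a * (c0 * d1 - c1 * d0)
        - (d1 * (a * c0 + b * c1 + c * c2) - c1 * (a * d0 + b * d1 + c * d2)));
        first by ring.
      by rewrite D0 E1 E2; ring.
    by move/eqP; rewrite mulf_eq0 (negbTE nc) /= => /eqP.
  have : c * (c2 * d0 - c0 * d2) = 0.
    transitivity (b * (c0 * d1 - c1 * d0)
      - (c0 * (a * d0 + b * d1 + c * d2) - d0 * (a * c0 + b * c1 + c * c2)));
      first by ring.
    by rewrite D0 E1 E2; ring.
  by move/eqP; rewrite mulf_eq0 (negbTE nc) /= => /eqP.
rewrite hH; apply: mulr_gt0; first by lra.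
by rewrite exprn_even_gt0 //= !mulf_neq0.
Qed.

Lemma scalar_bwd (R : realType) (a b c : R) : 0 < Hf a b c ->
  exists c0 d0 c1 d1 c2 d2 : R,
  [/\ c0 ^+ 2 + d0 ^+ 2 = 1, c1 ^+ 2 + d1 ^+ 2 = 1, c2 ^+ 2 + d2 ^+ 2 = 1,
      a * c0 + b * c1 + c * c2 = 0 /\ a * d0 + b * d1 + c * d2 = 0
    & c0 * d1 - c1 * d0 != 0].
Proof.
move=> hH.
have na : a != 0.
  apply/eqP => a0; move: hH; rewrite /Hf a0.
  have -> : (0 + b - c) * (0 - b + c) * (- 0 + b + c) * (0 + b + c)
    = - ((b - c) * (b + c)) ^+ 2 by ring.
  by rewrite oppr_gt0 ltNge sqr_ge0.
have nb : b != 0.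
  apply/eqP => b0; move: hH; rewrite /Hf b0.
  have -> : (a + 0 - c) * (a - 0 + c) * (- a + 0 + c) * (a + 0 + c)
    = - ((a - c) * (a + c)) ^+ 2 by ring.
  by rewrite oppr_gt0 ltNge sqr_ge0.
have nc : c != 0.
  apply/eqP => c0; move: hH; rewrite /Hf c0.
  have -> : (a + b - 0) * (a - b + 0) * (- a + b + 0) * (a + b + 0)
    = - ((a - b) * (a + b)) ^+ 2 by ring.
  by rewrite oppr_gt0 ltNge sqr_ge0.
set p := (c ^+ 2 - a ^+ 2 - b ^+ 2) / (2 * a * b).
have hp : (1 - p ^+ 2) * (4 * a ^+ 2 * b ^+ 2) = Hf a b c.
  by rewrite /p /Hf; field; rewrite ?na ?nb ?nc.
have pos : 0 < 1 - p ^+ 2.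
  have h4 : 0 < 4 * a ^+ 2 * b ^+ 2.
    apply: mulr_gt0; first apply: mulr_gt0.
    - by lra.
    - by rewrite exprn_even_gt0 //= na.
    - by rewrite exprn_even_gt0 //= nb.
  by rewrite -(pmulr_lgt0 _ h4) hp.
set q := Num.sqrt (1 - p ^+ 2).
have hq : q ^+ 2 = 1 - p ^+ 2 by rewrite sqr_sqrtr // ltW.
have qpos : 0 < q by rewrite sqrtr_gt0.
have h2p : 2 * a * b * p = c ^+ 2 - a ^+ 2 - b ^+ 2.
  by rewrite /p; field; rewrite ?na ?nb ?nc.
exists 1, 0, p, q, (- (a + b * p) / c), (- (b * q) / c); split.
- by ring.
- by rewrite hq; ring.
- have -> : (- (a + b * p) / c) ^+ 2 + (- (b * q) / c) ^+ 2
      = (a ^+ 2 + 2 * a * b * p + b ^+ 2 * (p ^+ 2 + q ^+ 2)) / c ^+ 2.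
    by field.
  by rewrite hq h2p; field.
- by split; field; rewrite ?nc.
- by rewrite mulr0 subr0 mul1r; apply: lt0r_neq0.
Qed.
Lemma subS_iff (R : realType) (S : 'M[R]_3) (w : 'rV[R]_3) m (x : 'M[R]_(m,3)) :
  \rank S = 2%N -> w != 0 -> S *m w^T = 0 -> (x <= S)%MS = (x *m w^T == 0).
Proof.
move=> rS nw Sw.
have SK : (S <= kermx w^T)%MS by apply/sub_kermxP.
have rK : \rank (kermx w^T) = 2%N by rewrite mxrank_ker mxrank_tr rank_rV nw.
have eSK : (S == kermx w^T)%MS by rewrite -(mxrank_leqif_eq SK).2 rS rK.
apply/idP/eqP.
  by move=> xS; apply/sub_kermxP; apply: submx_trans xS SK.
move/sub_kermxP => xK; case/andP: eSK => _ KS; exact: submx_trans xK KS.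
Qed.

Definition mk32 {R : realType} (c0 d0 c1 d1 c2 d2 : R) : 'M[R]_(3,2) :=
  \matrix_(i < 3, j < 2) nth 0 (nth [::] [:: [:: c0; d0]; [:: c1; d1]; [:: c2; d2]] i) j.

Lemma glue_bwd (R : realType) (S : 'M[R]_3) (w : 'rV[R]_3) (c0 d0 c1 d1 c2 d2 : R) :
  \rank S = 2%N -> w != 0 -> S *m w^T = 0 ->
  c0 ^+ 2 + d0 ^+ 2 = 1 -> c1 ^+ 2 + d1 ^+ 2 = 1 -> c2 ^+ 2 + d2 ^+ 2 = 1 ->
  w ord0 o30 * c0 + w ord0 o31 * c1 + w ord0 o32 * c2 = 0 ->
  w ord0 o30 * d0 + w ord0 o31 * d1 + w ord0 o32 * d2 = 0 ->
  (c0 * d1 - c1 * d0 != 0 \/ c0 * d2 - c2 * d0 != 0) ->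
  completely_elliptic 2 S.
Proof.
move=> rS nw Sw h0 h1 h2 E1 E2 hm.
split=> //; exists (mk32 c0 d0 c1 d1 c2 d2); split.
- rewrite (@subS_iff _ _ _ _ _ rS nw Sw) -trmx_mul trmx_eq0; apply/eqP/matrixP => i j.
  rewrite (ord1 i) !mxE sum3 !mxE /=.
  by case: j => [[|[|j]] Hj] //=.
- by move=> i; rewrite sum2 !mxE /=; case: i => [[|[|[|i]]] Hi].
- case: hm => hm.
    by apply: (@minor_rank _ _ o30 o31); rewrite !mxE.
  by apply: (@minor_rank _ _ o30 o32); rewrite !mxE.
Qed.

Lemma partB (R : realType) (S : 'M[R]_3) (w : 'rV[R]_3) : \rank S = 2%N ->
     \sum_(j < 3) w ord0 j ^+ 2 = 1 ->
     S *m w^T = 0 ->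
     (completely_elliptic 2 S <->
        ((coord3 w 0 + coord3 w 1 - coord3 w 2) *
         (coord3 w 0 - coord3 w 1 + coord3 w 2) *
         (- coord3 w 0 + coord3 w 1 + coord3 w 2) *
         (coord3 w 0 + coord3 w 1 + coord3 w 2) > 0
         \/
         exists2 v : 'rV[R]_3,
           v \in [:: vec3 0 1 1; vec3 0 1 (-1); vec3 1 0 1;
                     vec3 1 0 (-1); vec3 1 1 0; vec3 1 (-1) 0]
           & exists c : R, w = c *: v)).
Proof.
move=> rS hw Sw.
have nw : w != 0.
  apply/eqP => w0; move: hw; rewrite w0 sum3 !mxE expr2 !mul0r !addr0 => /eqP.
  by rewrite eq_sym oner_eq0.
rewrite coord3_0 coord3_1 coord3_2.
have Ew := vec3_eta w.
split.
  move=> [_ [s [sub hs rs]]].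
  have ws : w *m s = 0.
    move: sub; rewrite (@subS_iff _ _ _ _ _ rS nw Sw) -trmx_mul trmx_eq0 => /eqP //.
  have E1 := congr1 (fun M : 'M[R]_(1,2) => M ord0 o20) ws.
  have E2 := congr1 (fun M : 'M[R]_(1,2) => M ord0 o21) ws.
  rewrite /= !mxE sum3 in E1; rewrite /= !mxE sum3 in E2.
  have h0 := hs o30; have h1 := hs o31; have h2 := hs o32.
  rewrite sum2 in h0; rewrite sum2 in h1; rewrite sum2 in h2.
  have hr : ~ [/\ s o30 o20 * s o31 o21 - s o31 o20 * s o30 o21 = 0,
                 s o31 o20 * s o32 o21 - s o32 o20 * s o31 o21 = 0
               & s o32 o20 * s o30 o21 - s o30 o20 * s o32 o21 = 0].
    case=> D3 D1 D2.
    pose x : 'cV[R]_2 := \col_(i < 2) nth 0 [:: - s o30 o21; s o30 o20] i.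
    have nx : x != 0.
      apply/eqP => /matrixP x0.
      have := x0 o20 0; have := x0 o21 0; rewrite !mxE /= => e1 e2.
      move/eqP: e2; rewrite oppr_eq0 => /eqP e2.
      by move: h0; rewrite e1 e2 expr2 mul0r add0r => /eqP; rewrite eq_sym oner_eq0.
    have sx : s *m x = 0.
      apply/matrixP => i j; rewrite !mxE sum2 !mxE /=.
      case: i => [[|[|[|i]]] Hi] //.
      - have -> : Ordinal Hi = o30 by apply: val_inj.
        by ring.
      - have -> : Ordinal Hi = o31 by apply: val_inj.
        by rewrite -D3; ring.
      - have -> : Ordinal Hi = o32 by apply: val_inj.
        by rewrite -oppr0 -D2; ring.
    by have := ker_rank nx sx; rewrite rs.
  have := scalar_fwd h0 h1 h2 E1 E2 hr.
  case=> [hH|[[c0 [b0|b0]]|[[a0 [c0|c0]]|[b0 [c0|c0]]]]].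
  - by left.
  - right; exists (vec3 1 1 0); first by rewrite !inE eqxx ?orbT.
    by exists (w ord0 o30); rewrite {1}Ew vec3Z b0 c0 !mulr1 mulr0.
  - right; exists (vec3 1 (-1) 0); first by rewrite !inE eqxx ?orbT.
    by exists (w ord0 o30); rewrite {1}Ew vec3Z b0 c0 !mulr1 mulr0 mulrN1.
  - right; exists (vec3 0 1 1); first by rewrite !inE eqxx ?orbT.
    by exists (w ord0 o31); rewrite {1}Ew vec3Z a0 c0 !mulr1 mulr0.
  - right; exists (vec3 0 1 (-1)); first by rewrite !inE eqxx ?orbT.
    by exists (w ord0 o31); rewrite {1}Ew vec3Z a0 c0 !mulr1 mulr0 mulrN1.
  - right; exists (vec3 1 0 1); first by rewrite !inE eqxx ?orbT.
    by exists (w ord0 o30); rewrite {1}Ew vec3Z b0 c0 !mulr1 mulr0.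
  - right; exists (vec3 1 0 (-1)); first by rewrite !inE eqxx ?orbT.
    by exists (w ord0 o30); rewrite {1}Ew vec3Z b0 c0 !mulr1 mulr0 mulrN1.
case=> [hH | [v vin [k hk]]].
  have [c0 [d0 [c1 [d1 [c2 [d2 [h0 h1 h2 [E1 E2] hm]]]]]]] := scalar_bwd hH.
  by apply: (glue_bwd rS nw Sw h0 h1 h2 E1 E2); left.
have ew : forall i, w ord0 i = k * v ord0 i by move=> i; rewrite hk mxE.
rewrite !inE in vin.
have G := fun c0 d0 c1 d1 c2 d2 => @glue_bwd R S w c0 d0 c1 d1 c2 d2 rS nw Sw.
case/orP: vin => [/eqP hv | vin].
  rewrite hv in ew; apply: (G 0 1 1 0 (-1) 0); rewrite ?ew ?mxE /=; try ring.
  by left; apply/negP => /eqP; lra.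
case/orP: vin => [/eqP hv | vin].
  rewrite hv in ew; apply: (G 0 1 1 0 1 0); rewrite ?ew ?mxE /=; try ring.
  by left; apply/negP => /eqP; lra.
case/orP: vin => [/eqP hv | vin].
  rewrite hv in ew; apply: (G 1 0 0 1 (-1) 0); rewrite ?ew ?mxE /=; try ring.
  by left; apply/negP => /eqP; lra.
case/orP: vin => [/eqP hv | vin].
  rewrite hv in ew; apply: (G 1 0 0 1 1 0); rewrite ?ew ?mxE /=; try ring.
  by left; apply/negP => /eqP; lra.
case/orP: vin => [/eqP hv | vin].
  rewrite hv in ew; apply: (G 1 0 (-1) 0 0 1); rewrite ?ew ?mxE /=; try ring.
  by right; apply/negP => /eqP; lra.
move/eqP: vin => hv.
rewrite hv in ew; apply: (G 1 0 1 0 0 1); rewrite ?ew ?mxE /=; try ring.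
by right; apply/negP => /eqP; lra.
Qed.

Theorem mainTheorem3 (R : realType) :
  (* (a) one-dimensional subspaces *)
  (forall S : 'M[R]_3, \rank S = 1%N ->
     (completely_elliptic 1 S <->
        [\/ (S == vec3 1 1 1)%MS, (S == vec3 (-1) 1 1)%MS,
            (S == vec3 1 (-1) 1)%MS | (S == vec3 1 1 (-1))%MS]))
  /\
  (* (b) two-dimensional subspaces with unit normal vector w *)
  (forall (S : 'M[R]_3) (w : 'rV[R]_3), \rank S = 2%N ->
     \sum_(j < 3) w ord0 j ^+ 2 = 1 ->
     S *m w^T = 0 ->
     (completely_elliptic 2 S <->
        ((coord3 w 0 + coord3 w 1 - coord3 w 2) *
         (coord3 w 0 - coord3 w 1 + coord3 w 2) *
         (- coord3 w 0 + coord3 w 1 + coord3 w 2) *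
         (coord3 w 0 + coord3 w 1 + coord3 w 2) > 0
         \/
         exists2 v : 'rV[R]_3,
           v \in [:: vec3 0 1 1; vec3 0 1 (-1); vec3 1 0 1;
                     vec3 1 0 (-1); vec3 1 1 0; vec3 1 (-1) 0]
           & exists c : R, w = c *: v))).
Proof.
split; first exact: partA.
move=> S w; exact: partB.
Qed.
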